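(* For all unit types $U,U'$ and all scalars $\alpha,\beta\in\mathcal S$: if $\alpha.U\equiv\beta.U'$ then $\alpha=\beta$, and if moreover $\alpha\neq0$ then $U\equiv U'$.
   Context: Fix a commutative ring $(\mathcal S,+,\times)$. Types: $T ::= U \mid \forall X.T \mid \alpha.T \mid \overline0$; unit types: $U ::= X \mid U\to T \mid \forall X.U$ ($\alpha\in\mathcal S$, $X$ type variables). Type equivalence $\equiv$ is the least congruence on types with $\alpha.\overline0\equiv\overline0$, $0.T\equiv\overline0$, $1.T\equiv T$, $\alpha.(\beta.T)\equiv(\alpha\times\beta).T$, $\forall X.\alpha.T\equiv\alpha.\forall X.T$. *)

(* Defs.v *)
From mathcomp Require Import all_boot all_algebra.
Set Implicit Arguments. Unset Strict Implicit. Unset Printing Implicit Defensive.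
Import GRing.Theory.
Local Open Scope ring_scope.

Section Types.
Variable S : comPzRingType.

(* Raw syntax of types, with de Bruijn indices for type variables
   (so types are identified up to alpha-conversion). *)
Inductive ty : Type :=
| TVar  : nat -> ty
| Arr   : ty -> ty -> ty
| All   : ty -> ty             (* forall X. T  (binds index 0) *)
| Scal  : S -> ty -> ty
| Zero  : ty.

Inductive is_unit : ty -> Prop :=
| u_var : forall n, is_unit (TVar n)
| u_arr : forall u t, is_unit u -> is_type t -> is_unit (Arr u t)
| u_all : forall u, is_unit u -> is_unit (All u)
with is_type : ty -> Prop :=
| t_unit : forall u, is_unit u -> is_type u
| t_all  : forall t, is_type t -> is_type (All t)
| t_scal : forall a t, is_type t -> is_type (Scal a t)
| t_zero : is_type Zero.

Inductive ty_equiv : ty -> ty -> Prop :=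
| eq_scal_zero : forall a, ty_equiv (Scal a Zero) Zero
| eq_zero_scal : forall t, is_type t -> ty_equiv (Scal 0 t) Zero
| eq_one_scal  : forall t, is_type t -> ty_equiv (Scal 1 t) t
| eq_scal_scal : forall a b t, is_type t ->
    ty_equiv (Scal a (Scal b t)) (Scal (a * b) t)
| eq_all_scal  : forall a t, is_type t ->
    ty_equiv (All (Scal a t)) (Scal a (All t))
| eq_refl  : forall t, is_type t -> ty_equiv t t
| eq_sym   : forall t t', ty_equiv t t' -> ty_equiv t' t
| eq_trans : forall t1 t2 t3, ty_equiv t1 t2 -> ty_equiv t2 t3 -> ty_equiv t1 t3
| eq_ctx_arr : forall u u' t t', is_unit u -> is_unit u' ->
    ty_equiv u u' -> ty_equiv t t' -> ty_equiv (Arr u t) (Arr u' t')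
| eq_ctx_all : forall t t', ty_equiv t t' -> ty_equiv (All t) (All t')
| eq_ctx_scal : forall a t t', ty_equiv t t' -> ty_equiv (Scal a t) (Scal a t').

End Types.

(* Main.v *)
Require Import Defs.
From mathcomp Require Import all_boot all_algebra.
Local Open Scope ring_scope.
Import GRing.Theory.

Section Aux.
Variable S : comPzRingType.

Fixpoint sc (t : ty S) : S :=
  match t with
  | TVar _ => 1 | Arr _ _ => 1 | All t => sc t
  | Scal a t => a * sc t | Zero => 0 end.

Fixpoint un (t : ty S) : ty S :=
  match t with
  | All t => All (un t) | Scal _ t => un t | t => t end.

Lemma sc_unit u : is_unit u -> sc u = 1.
Proof. by elim. Qed.

Lemma un_unit u : is_unit u -> un u = u.
Proof. by elim => //= u0 _ ->. Qed.

Lemma un_type t : is_type t -> is_type (un t).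
Proof.
elim => //=.
- by move=> u Hu; rewrite un_unit //; constructor.
- by move=> t0 _ IH; constructor.
- by move=> *; constructor.
Qed.

Lemma sc_equiv t t' : ty_equiv t t' -> sc t = sc t'.
Proof.
elim => //=.
- by move=> *; rewrite mulr0.
- by move=> *; rewrite mul0r.
- by move=> *; rewrite mul1r.
- by move=> *; rewrite mulrA.
- by move=> ??? _ -> _ ->.
- by move=> ??? _ ->.
Qed.

Arguments sc_equiv {t t'}.
Lemma un_equiv t t' : ty_equiv t t' -> sc t <> 0 -> ty_equiv (un t) (un t').
Proof.
elim => /=.
- by move=> *; apply: Defs.eq_refl; constructor.
- by move=> t0 _ H0; exfalso; apply: H0; rewrite mul0r.
- by move=> t0 Ht _; apply: Defs.eq_refl; apply: un_type.
- by move=> a b t0 Ht _; apply: Defs.eq_refl; apply: un_type.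
- by move=> a t0 Ht _; apply: Defs.eq_refl; constructor; apply: un_type.
- by move=> t0 Ht _; apply: Defs.eq_refl; apply: un_type.
- move=> t1 t2 H IH Hs; apply: Defs.eq_sym; apply: IH.
  by rewrite (sc_equiv H).
- move=> t1 t2 t3 H1 IH1 H2 IH2 Hs; apply: Defs.eq_trans (IH1 Hs) (IH2 _).
  by rewrite -(sc_equiv H1).
- by move=> u u' t0 t0' Hu Hu' H _ H' _ _; apply: eq_ctx_arr.
- by move=> t0 t0' _ IH Hs; apply: eq_ctx_all; apply: IH.
- move=> a t0 t0' _ IH Hs; apply: IH => H0; apply: Hs; by rewrite H0 mulr0.
Qed.
End Aux.

Theorem mainTheorem18 (S : comPzRingType) (U U' : ty S) (a b : S) :
  is_unit U -> is_unit U' ->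
  ty_equiv (Scal a U) (Scal b U') ->
  a = b /\ (a <> 0 -> ty_equiv U U').
Proof.
move=> HU HU' H.
have Hab := @sc_equiv _ _ _ H; rewrite /= !sc_unit // !mulr1 in Hab; split => // Hb.
have := @un_equiv _ _ _ H; rewrite /= !un_unit // !sc_unit // mulr1; move=> X; by apply: X.
Qed.
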